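(* Let $E$ be a finite directed graph with no sinks, $Z$ a weight sequence and $p\ge1$. Then $Z$ satisfies Condition A(p) if and only if $u_\alpha z=zu_\alpha$ for every path $\alpha$ with $|\alpha|=p$. In that case also $u_\alpha^*z=zu_\alpha^*$ for every path $\alpha$ with $|\alpha|=p$.
   Context: Graph conventions: $E=(E^0,E^1,s,r)$ finite directed graph; paths $\alpha=e_1\cdots e_k$ with $s(e_j)=r(e_{j+1})$, $|\alpha|=k$. Fock setup: $A=C(E^0)$, $X_E$ the graph correspondence over $A$; $X_E^{\otimes k}$ has basis $\{\delta_\alpha:|\alpha|=k\}$ with $\delta_\alpha\otimes\delta_\beta=\delta_{\alpha\beta}$ if $s(\alpha)=r(\beta)$, else $0$. $\mathcal{F}(X_E)=\bigoplus_kX_E^{\otimes k}$, $\mathcal{K}$ compacts, $S_e\delta_\beta=\delta_{e\beta}$ (or $0$). Weight sequence $Z=\{Z_k\}$ ($Z_k$ adjointable on $X_E^{\otimes k}$, commuting with left $A$-action, $Z_0=I$, uniformly bounded, positive invertible, $Z_k\ge\epsilon I$ for $k\ge1$), $Z=\mathrm{diag}(Z_k)$; $q$ the quotient modulo $\mathcal{K}$; $u_e=q(S_e)$, $u_\alpha=u_{e_1}\cdots u_{e_k}$, $z=q(Z)$. Condition A(p): $\lim_{k\to\infty}\|I_p\otimes Z_k-Z_{k+p}\|=0$, where $(I_p\otimes Z_k)\delta_{\beta\gamma}=\delta_\beta\otimes Z_k\delta_\gamma$ for $|\beta|=p$, $|\gamma|=k$. *)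

(* Defs.v *)
From mathcomp Require Import all_boot all_algebra.
From mathcomp Require Import complex.
From mathcomp Require Import reals.
Set Implicit Arguments.
Unset Strict Implicit.
Unset Printing Implicit Defensive.
Import GRing.Theory Num.Theory.
Local Open Scope ring_scope.
Local Open Scope complex_scope.

Section GraphFock.
Variables (R : realType) (E0 E1 : finType) (src rg : E1 -> E0).

Local Notation C := R[i].

(* A path alpha = e_1 ... e_k (with src e_j = rg e_(j+1)) is represented by
   the pair (s(alpha), [:: e_1; ...; e_k]); a path of length 0 is a vertex
   (v, [::]).  Arbitrary pairs are allowed as elements of the type, validity
   is the predicate [is_path]. *)
Definition Path := (E0 * seq E1)%type.

Definition is_path (a : Path) : bool :=
  match a.2 with
  | [::] => true
  | e :: t => path (fun x y => src x == rg y) e t && (src (last e t) == a.1)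
  end.

Definition plen (a : Path) : nat := size a.2.
Definition psrc (a : Path) : E0 := a.1.
Definition prng (a : Path) : E0 := if a.2 is e :: _ then rg e else a.1.
(* concatenation alpha beta (meaningful when psrc alpha = prng beta) *)
Definition pcat (a b : Path) : Path := (b.1, a.2 ++ b.2).
Definition pdrop (p : nat) (d : Path) : Path := (d.1, drop p d.2).
Definition ptake (p : nat) (d : Path) : Path := (prng (pdrop p d), take p d.2).

Definition kpath (k : nat) := (E0 * k.-tuple E1)%type.
Definition kp (k : nat) (g : kpath k) : Path := (g.1, val g.2).

(* vectors of the Fock module: coefficient functions on paths
   (x = sum_alpha x(alpha) delta_alpha) *)
Definition Vec := Path -> C.

Definition sqn (z : C) : R := Normc.normc z ^+ 2.

Definition ract (x : Vec) (a : E0 -> C) : Vec := fun d => x d * a (psrc d).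
Definition lact (a : E0 -> C) (x : Vec) : Vec := fun d => a (prng d) * x d.

Definition kinnerA (k : nat) (x y : Vec) (v : E0) : C :=
  \sum_(g : kpath k | is_path (kp g) && (psrc (kp g) == v))
     conjc (x (kp g)) * y (kp g).

(* squared Hilbert norm of the degree-k part of x *)
Definition knorm (k : nat) (x : Vec) : R :=
  \sum_(g : kpath k | is_path (kp g)) sqn (x (kp g)).

(* an operator on X_E^{(x) k} given by its matrix W k d g (d, g of length k) *)
Definition wact (W : nat -> Path -> Path -> C) (k : nat) (x : Vec) : Vec :=
  fun d => \sum_(g : kpath k | is_path (kp g)) W k d (kp g) * x (kp g).

(* (I_p (x) Z_k) on X_E^{(x)(p+k)} : delta_beta (x) delta_gamma |->
   delta_beta (x) Z_k delta_gamma *)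
Definition tact (Z : nat -> Path -> Path -> C) (p k : nat) (x : Vec) : Vec :=
  fun d => \sum_(g : kpath k | is_path (kp g) && (prng (kp g) == prng (pdrop p d)))
             Z k (pdrop p d) (kp g) * x (pcat (ptake p d) (kp g)).

Definition eqk (k : nat) (x y : Vec) : Prop :=
  forall d, is_path d -> plen d = k -> x d = y d.

Definition weight_seq (Z : nat -> Path -> Path -> C) : Prop :=
  (forall k, exists W : nat -> Path -> Path -> C,
      forall x y v, kinnerA k (wact Z k x) y v = kinnerA k x (wact W k y) v)
  /\ (forall k a x, eqk k (wact Z k (lact a x)) (lact a (wact Z k x)))
  /\ (forall x, eqk 0 (wact Z 0 x) x)
  /\ (exists M : R, forall k x, knorm k (wact Z k x) <= M * knorm k x)
  /\ (forall k x v, 0 <= kinnerA k x (wact Z k x) v)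
  /\ (forall k, exists W : nat -> Path -> Path -> C,
        forall x, eqk k (wact W k (wact Z k x)) x /\ eqk k (wact Z k (wact W k x)) x)
  /\ (exists eps : R, 0 < eps /\
        forall k, (1 <= k)%N -> forall x v,
          (eps%:C * kinnerA k x x v <= kinnerA k x (wact Z k x) v)).

Definition condA (Z : nat -> Path -> Path -> C) (p : nat) : Prop :=
  forall eps : R, 0 < eps -> exists N : nat, forall k : nat, (N <= k)%N ->
    forall x : Vec,
      knorm (k + p) (fun d => tact Z p k x d - wact Z (k + p) x d)
        <= eps * knorm (k + p) x.

(* ||x||^2 <= c (sup of finite partial sums of |x(d)|^2) *)
Definition l2le (x : Vec) (c : R) : Prop :=
  forall s : seq Path, uniq s -> \sum_(d <- s) sqn (x d) <= c.

Definition l2 (x : Vec) : Prop :=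
  (forall d, ~~ is_path d -> x d = 0) /\ exists c : R, l2le x c.

Definition Op := Vec -> Vec.

Definition bounded_op (T : Op) : Prop :=
  (forall x, l2 x -> l2 (T x))
  /\ (forall (a : C) x y, l2 x -> l2 y ->
        T (fun d => a * x d + y d) = (fun d => a * T x d + T y d))
  /\ (exists M : R, forall x c, l2 x -> l2le x c -> l2le (T x) (M * c)).

Definition modmap (T : Op) : Prop :=
  forall x a, l2 x -> T (ract x a) = ract (T x) a.

Definition finite_rank (T : Op) : Prop :=
  exists n (v : 'I_n -> Vec), (forall i, l2 (v i)) /\
    forall x, l2 x -> exists c : 'I_n -> C, T x = (fun d => \sum_i c i * v i d).

Definition compact_op (T : Op) : Prop :=
  bounded_op T /\
  forall eps : R, 0 < eps -> exists F : Op,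
    bounded_op F /\ modmap F /\ finite_rank F /\
    forall x c, l2 x -> l2le x c -> l2le (fun d => T x d - F x d) (eps * c).

Definition Zop (Z : nat -> Path -> Path -> C) : Op :=
  fun x d => if is_path d then wact Z (plen d) x d else 0.

(* S_alpha delta_gamma = delta_(alpha gamma) (or 0) *)
Definition Sop (a : Path) : Op :=
  fun x d =>
    if is_path d && (take (plen a) d.2 == a.2)
       && (prng (pdrop (plen a) d) == psrc a)
    then x (pdrop (plen a) d) else 0.

(* S_alpha^* delta_(alpha gamma) = delta_gamma, S_alpha^* delta_beta = 0 otherwise *)
Definition Sadj (a : Path) : Op :=
  fun x d => if is_path d && (prng d == psrc a) then x (pcat a d) else 0.

Definition opsub (T U : Op) : Op := fun x d => T x d - U x d.
Definition opcomp (T U : Op) : Op := fun x => T (U x).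

(* q(T) = q(U) in L(F)/K  iff  T - U is compact *)
Definition eq_modK (T U : Op) : Prop := compact_op (opsub T U).

Definition no_sinks : Prop := forall v : E0, exists e : E1, src e = v.

End GraphFock.

(* Main.v *)
Require Import Defs.
From mathcomp Require Import all_boot all_order all_algebra.
From mathcomp Require Import complex.
From mathcomp Require Import reals.
From mathcomp Require Import ring lra zify.
From Stdlib Require Import FunctionalExtensionality ClassicalEpsilon Classical.
Import Order.TTheory GRing.Theory Num.Theory.
Local Open Scope ring_scope.

Section Main.
Variables (R : realType) (E0 E1 : finType) (src rg : E1 -> E0).
Local Notation C := R[i].
Local Notation Path := (Path E0 E1).
Local Notation Vec := (Vec R E0 E1).
Local Notation is_path := (is_path src rg).
Local Notation knorm := (@knorm R E0 E1 src rg).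
Local Notation prng := (@prng E0 E1 rg).
Local Notation ptake := (@ptake E0 E1 rg).
Implicit Types (a d : Path) (x y : Vec).
Definition ps (k : nat) : seq Path :=
  [seq kp g | g <- index_enum (kpath E0 E1 k) & is_path (kp g)].

Lemma mem_ps k d : (d \in ps k) = is_path d && (plen d == k).
Proof.
apply/mapP/andP => [[g]|[Hp /eqP Hk]].
  rewrite mem_filter => /andP[Hp _] ->; split => //.
  by rewrite /plen /kp /= size_tuple.
have Hs : size d.2 == k by rewrite -Hk.
exists (d.1, Tuple Hs); last by case: d Hp Hs {Hk}.
by rewrite mem_filter mem_index_enum andbT /kp /=; case: d Hp Hs {Hk}.
Qed.

Lemma uniq_ps k : uniq (ps k).
Proof.
rewrite map_inj_uniq ?filter_uniq ?index_enum_uniq //.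
by move=> [v1 t1] [v2 t2] [-> /val_inj ->].
Qed.

Lemma big_ps (T : Type) (idx : T) (op : T -> T -> T) k (P : pred Path) (F : Path -> T) :
  \big[op/idx]_(g : kpath E0 E1 k | is_path (kp g) && P (kp g)) F (kp g)
  = \big[op/idx]_(d <- ps k | P d) F d.
Proof. by rewrite big_map big_filter_cond. Qed.

Lemma big_ps0 (T : Type) (idx : T) (op : T -> T -> T) k (F : Path -> T) :
  \big[op/idx]_(g : kpath E0 E1 k | is_path (kp g)) F (kp g)
  = \big[op/idx]_(d <- ps k) F d.
Proof. by rewrite big_map big_filter. Qed.

Lemma knormE k (x : Vec) : knorm k x = \sum_(d <- ps k) sqn (x d).
Proof. exact: (@big_ps0 _ _ _ k (fun d => sqn (x d))). Qed.

Lemma wactE W k (x : Vec) d : wact src rg W k x d = \sum_(g <- ps k) W k d g * x g.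
Proof. exact: (@big_ps0 _ _ _ k (fun g => W k d g * x g)). Qed.

Lemma tactE W p k (x : Vec) d : tact src rg W p k x d =
  \sum_(g <- ps k | prng g == prng (pdrop p d)) W k (pdrop p d) g * x (pcat (ptake p d) g).
Proof. exact: (@big_ps _ _ _ k (fun g => prng g == prng (pdrop p d)) (fun g => W k (pdrop p d) g * x (pcat (ptake p d) g))). Qed.

Lemma kinnerAE k (x y : Vec) v : kinnerA src rg k x y v =
  \sum_(g <- ps k | psrc g == v) conjc (x g) * y g.
Proof. exact: (@big_ps _ _ _ k (fun g => psrc g == v) (fun g => conjc (x g) * y g)). Qed.

Lemma sum_sub_le (T : eqType) (s t : seq T) (F : T -> R) :
  uniq s -> uniq t -> {subset s <= t} -> (forall i, i \in t -> 0 <= F i) ->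
  \sum_(i <- s) F i <= \sum_(i <- t) F i.
Proof.
move=> Us Ut st F0.
rewrite [X in _ <= X](bigID (mem s)) /=.
have -> : \sum_(i <- t | i \in s) F i = \sum_(i <- s) F i.
  rewrite -big_filter; apply: perm_big; apply: uniq_perm => //.
    by rewrite filter_uniq.
  move=> x; rewrite mem_filter; apply/andP/idP => [[]//|xs]; split => //.
  exact: st.
rewrite lerDl big_seq_cond; apply: sumr_ge0 => i /andP[it _]; exact: F0.
Qed.

Lemma sum_inj_le (T U : eqType) (s : seq T) (t : seq U) (f : T -> R) (h : T -> U) (F : U -> R) :
  uniq s -> uniq t -> (forall j, j \in t -> 0 <= F j) ->
  (forall i, i \in s -> f i != 0 -> h i \in t /\ f i <= F (h i)) ->
  (forall i j, i \in s -> j \in s -> f i != 0 -> f j != 0 -> h i = h j -> i = j) ->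
  \sum_(i <- s) f i <= \sum_(j <- t) F j.
Proof.
move=> Us Ut F0 Hf Hinj.
rewrite (bigID (fun i => f i != 0)) /= [X in _ + X]big1 ?addr0; last first.
  by move=> i /negPn/eqP.
rewrite -big_filter.
apply: (@le_trans _ _ (\sum_(i <- [seq i <- s | f i != 0]) F (h i))).
  rewrite big_seq [X in _ <= X]big_seq; apply: ler_sum => i.
  by rewrite mem_filter => /andP[fi si]; case: (Hf i si fi).
rewrite (_ : \sum_(i <- [seq i <- s | f i != 0]) F (h i) = \sum_(j <- map h [seq i <- s | f i != 0]) F j); last by rewrite big_map.
apply: sum_sub_le => //.
- rewrite map_inj_in_uniq ?filter_uniq // => x y.
  rewrite !mem_filter => /andP[? ?] /andP[? ?]; exact: Hinj.
- move=> j; case/mapP => i; rewrite mem_filter => /andP[fi si] ->.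
  by case: (Hf i si fi).
Qed.

Lemma normc_ge0 (z : C) : 0 <= Normc.normc z.
Proof. by case: z => a b; exact: sqrtr_ge0. Qed.

Lemma sqn_ge0 (z : C) : 0 <= sqn z.
Proof. by rewrite /sqn exprn_ge0 // normc_ge0. Qed.

Lemma sqn0 : sqn (0 : C) = 0.
Proof. by rewrite /sqn Normc.normc0 expr0n. Qed.

Lemma sqn_eq0 (z : C) : sqn z = 0 -> z = 0.
Proof. by move/eqP; rewrite /sqn expf_eq0 /= => /eqP/Normc.eq0_normc. Qed.

Lemma sqnM (a b : C) : sqn (a * b) = sqn a * sqn b.
Proof. by rewrite /sqn Normc.normcM exprMn. Qed.

Lemma sqnN (z : C) : sqn (- z) = sqn z.
Proof. by rewrite /sqn normcN. Qed.

Lemma sqnD (a b : C) : sqn (a + b) <= 2 * (sqn a + sqn b).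
Proof.
rewrite /sqn.
have h1 := le_normcD a b.
have h0 := normc_ge0 (a + b).
set u := Normc.normc (a + b) in h1 h0 *.
set x := Normc.normc a in h1 *; set y := Normc.normc b in h1 *.
apply: (@le_trans _ _ ((x + y) ^+ 2)).
  by rewrite ler_pXn2r // ?nnegrE // (le_trans h0 h1).
rewrite -subr_ge0.
have -> : 2 * (x ^+ 2 + y ^+ 2) - (x + y) ^+ 2 = (x - y) ^+ 2.
  by rewrite !expr2; ring.
exact: sqr_ge0.
Qed.

Lemma is_path_cat v (s1 s2 : seq E1) :
  is_path (v, s1 ++ s2) = is_path (prng (v, s2), s1) && is_path (v, s2).
Proof.
case: s1 => [|f u] //=.
case: s2 => [|e t] /=; first by rewrite cats0 andbT.
rewrite /is_path /Defs.prng /= cat_path last_cat /=.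
by rewrite -!andbA.
Qed.

Lemma is_path_nil v : is_path (v, [::]).
Proof. by []. Qed.

Lemma path_src_uniq v w (s : seq E1) : s != [::] -> is_path (v, s) -> is_path (w, s) -> v = w.
Proof.
case: s => [|e t] // _ /=.
rewrite /is_path /= => /andP[_ /eqP H1] /andP[_ /eqP H2].
by rewrite -H1 -H2.
Qed.

Lemma pdrop_path p d : is_path d -> is_path (pdrop p d).
Proof.
case: d => v s; rewrite -{1}(cat_take_drop p s) is_path_cat.
by case/andP.
Qed.

Lemma ptake_path p d : is_path d -> is_path (ptake p d).
Proof.
case: d => v s; rewrite -{1}(cat_take_drop p s) is_path_cat.
by case/andP.
Qed.

Lemma pcat_path a g : is_path a -> is_path g -> psrc a = prng g -> is_path (pcat a g).
Proof.
case: a => va sa; case: g => vg sg /= Ha Hg Hs.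
rewrite /pcat /= is_path_cat Hg andbT.
by rewrite /psrc /= in Hs; rewrite -Hs.
Qed.

Lemma pcat_take_drop p d : pcat (ptake p d) (pdrop p d) = d.
Proof. by case: d => v s; rewrite /pcat /= cat_take_drop. Qed.

Lemma plen_pcat a g : plen (pcat a g) = (plen a + plen g)%N.
Proof. by rewrite /plen /pcat size_cat. Qed.

Lemma plen_pdrop p d : plen (pdrop p d) = (plen d - p)%N.
Proof. by rewrite /plen /pdrop size_drop. Qed.

Lemma plen_ptake p d : (p <= plen d)%N -> plen (ptake p d) = p.
Proof. by move=> H; rewrite /plen /ptake /= size_take; case: ltngtP H. Qed.

Lemma pdrop_pcat p a g : plen a = p -> pdrop p (pcat a g) = g.
Proof. by case: g => v s <-; rewrite /pdrop /pcat /= drop_size_cat. Qed.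

Lemma ptake_pcat p a g : plen a = p -> ptake p (pcat a g) = (prng g, a.2).
Proof.
move=> Ha; rewrite /ptake (@pdrop_pcat p a g Ha).
by rewrite /pcat /= take_size_cat.
Qed.

Lemma psrc_pcat a g : psrc (pcat a g) = psrc g.
Proof. by []. Qed.

Lemma psrc_pdrop p d : psrc (pdrop p d) = psrc d.
Proof. by []. Qed.

Lemma psrc_path (a : Path) : is_path a -> a.2 != [::] -> forall v, is_path (v, a.2) -> a.1 = v.
Proof. by case: a => w s /= Ha Hs v Hv; exact: (@path_src_uniq w v s Hs Ha Hv). Qed.

Lemma ptake_eq p d a : is_path d -> is_path a -> plen a = p -> (1 <= p)%N ->
  take p d.2 = a.2 -> ptake p d = a.
Proof.
move=> Hd Ha Hl Hp Ht.
have Htk := ptake_path p d Hd.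
case: a Ha Hl Ht => w s Ha Hl /= Ht.
rewrite /ptake /= Ht; congr pair.
apply: esym; apply: (@path_src_uniq _ _ s) => //.
  by apply/eqP => Hs; rewrite Hs /plen /= in Hl; rewrite -Hl in Hp.
by move: Htk; rewrite /ptake /= Ht.
Qed.

Fixpoint pathsK (K : nat) : seq Path :=
  if K is K'.+1 then pathsK K' ++ ps K' else [::].

Lemma mem_pathsK K d : (d \in pathsK K) = is_path d && (plen d < K)%N.
Proof.
elim: K => [|K IH] /=; first by rewrite in_nil ltn0 andbF.
rewrite mem_cat IH mem_ps [in RHS]ltnS [in RHS]leq_eqVlt -andb_orr.
by rewrite [in RHS]orbC.
Qed.

Lemma uniq_pathsK K : uniq (pathsK K).
Proof.
elim: K => [|K IH] //=.
rewrite cat_uniq IH uniq_ps andbT /=.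
apply/hasPn => d; rewrite mem_ps mem_pathsK => /andP[_ /eqP ->].
by rewrite ltnn andbF.
Qed.

Definition en K (x : Vec) : R := \sum_(0 <= k < K) knorm k x.

Lemma knorm_ge0 k (x : Vec) : 0 <= knorm k x.
Proof. by rewrite knormE sumr_ge0 // => d _; apply: sqn_ge0. Qed.

Lemma en_ge0 K (x : Vec) : 0 <= en K x.
Proof. by rewrite /en sumr_ge0 // => k _; apply: knorm_ge0. Qed.

Lemma sum_pathsK K (F : Path -> R) :
  \sum_(d <- pathsK K) F d = \sum_(0 <= k < K) \sum_(d <- ps k) F d.
Proof.
elim: K => [|K IH] /=; first by rewrite big_nil big_geq.
by rewrite big_cat IH big_nat_recr.
Qed.

Lemma enE K (x : Vec) : en K x = \sum_(d <- pathsK K) sqn (x d).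
Proof.
rewrite sum_pathsK /en; apply: eq_bigr => k _; exact: knormE.
Qed.

Lemma LD1 (x : Vec) c : l2le x c -> forall K, en K x <= c.
Proof. by move=> H K; rewrite enE; apply: H; apply: uniq_pathsK. Qed.

Lemma LD2 (x : Vec) c : (forall d, ~~ is_path d -> x d = 0) ->
  (forall K, en K x <= c) -> l2le x c.
Proof.
move=> H0 HK s Us.
apply: le_trans (HK (\max_(d <- s) plen d).+1).
rewrite enE.
apply: (@sum_inj_le _ _ _ _ _ id) => //.
- exact: uniq_pathsK.
- by move=> j _; apply: sqn_ge0.
- move=> d ds Hn; split => //.
  rewrite mem_pathsK ltnS.
  apply/andP; split; last by apply: (@leq_bigmax_seq _ _ xpredT (@plen E0 E1)).
  case: (boolP (is_path d)) => [//|Hp].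
  by move: Hn; rewrite H0 // sqn0 eqxx.
Qed.

Lemma l2le_le (x y : Vec) c : (forall d, sqn (x d) <= sqn (y d)) -> l2le y c -> l2le x c.
Proof.
move=> H Hy s Us; apply: le_trans (Hy s Us).
by apply: ler_sum => d _.
Qed.

Definition delta (e : Path) : Vec := fun d => if d == e then 1 else 0.

Lemma sum_delta_cond k e (P : pred Path) (F : Path -> C) : e \in ps k ->
  \sum_(g <- ps k | P g) F g * delta e g = if P e then F e else 0.
Proof.
move=> He; rewrite big_mkcond (bigD1_seq e) ?uniq_ps //= big1 ?addr0.
  by rewrite /delta eqxx mulr1.
by move=> g /negPf Hg; rewrite /delta Hg mulr0; case: (P g).
Qed.

Lemma sum_delta k e (F : Path -> C) : e \in ps k ->
  \sum_(g <- ps k) F g * delta e g = F e.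
Proof.
move=> He; have := @sum_delta_cond k e xpredT F He.
by rewrite big_mkcond /=; under [X in X = _ -> _]eq_bigr do rewrite /=.
Qed.

Lemma sqn_neq0 (z : C) : sqn z != 0 -> z != 0.
Proof. by apply: contraNneq => ->; rewrite sqn0. Qed.

Lemma knorm_ext k x y : (forall d, d \in ps k -> x d = y d) -> knorm k x = knorm k y.
Proof. by move=> H; rewrite !knormE; apply: eq_big_seq => d /H ->. Qed.

Lemma knorm_le k x y : (forall d, d \in ps k -> sqn (x d) <= sqn (y d)) -> knorm k x <= knorm k y.
Proof.
by move=> H; rewrite !knormE big_seq [X in _ <= X]big_seq; apply: ler_sum => d /H.
Qed.

Variables (p : nat) (Hp1 : (1 <= p)%N).
Local Notation Sop := (@Sop R E0 E1 src rg).
Local Notation Sadj := (@Sadj R E0 E1 src rg).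

Lemma Sop_path a x d : is_path a -> plen a = p -> is_path d ->
  Sop a x d = if take p d.2 == a.2 then x (pdrop p d) else 0.
Proof.
move=> Ha Hl Hd; rewrite /Defs.Sop Hl Hd /=.
case E: (take p d.2 == a.2) => //=.
have Ht := @ptake_eq p d a Hd Ha Hl Hp1 (eqP E).
by rewrite -Ht /ptake /psrc /= eqxx.
Qed.

Lemma Sop_npath a x d : ~~ is_path d -> Sop a x d = 0.
Proof. by move=> H; rewrite /Defs.Sop (negbTE H). Qed.

Lemma K1 a x k : is_path a -> plen a = p -> knorm (k + p) (Sop a x) <= knorm k x.
Proof.
move=> Ha Hl; rewrite !knormE.
apply: (@sum_inj_le _ _ _ _ (fun d => sqn (Sop a x d)) (pdrop p) (fun g => sqn (x g))).
- exact: uniq_ps.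
- exact: uniq_ps.
- by move=> *; apply: sqn_ge0.
- move=> d; rewrite mem_ps => /andP[Hd /eqP Hk] /sqn_neq0.
  rewrite !Sop_path //; case: (take p d.2 =P a.2) => [_ _|_]; last by rewrite eqxx.
  split => //.
  by rewrite mem_ps pdrop_path //= plen_pdrop Hk addnK.
- move=> d d'; rewrite !mem_ps => /andP[Hd _] /andP[Hd' _] /sqn_neq0 H /sqn_neq0 H'.
  move: H H'; rewrite !Sop_path //.
  case: (take p d.2 =P a.2) => [Et1 _|_]; last by rewrite eqxx.
  case: (take p d'.2 =P a.2) => [Et2 _|_]; last by rewrite eqxx.
  case: d d' Hd Hd' Et1 Et2 => v s [v' s'] /= _ _ Et1 Et2 [-> Ed].
  by rewrite -(cat_take_drop p s) -(cat_take_drop p s') Et1 Et2 Ed.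
Qed.

Lemma K1' a x k : is_path a -> plen a = p -> knorm k (Sadj a x) <= knorm (k + p) x.
Proof.
move=> Ha Hl; rewrite !knormE.
apply: (@sum_inj_le _ _ _ _ (fun d => sqn (Sadj a x d)) (pcat a) (fun g => sqn (x g))).
- exact: uniq_ps.
- exact: uniq_ps.
- by move=> *; apply: sqn_ge0.
- move=> d; rewrite mem_ps => /andP[Hd /eqP Hk] /sqn_neq0.
  rewrite /Defs.Sadj Hd /=; case: (prng d =P psrc a) => [Hr _|_]; last by rewrite eqxx.
  split => //.
  by rewrite mem_ps pcat_path //= plen_pcat Hk Hl addnC.
- move=> d d' _ _ _ _ E.
  by rewrite -(@pdrop_pcat p a d Hl) E (@pdrop_pcat p a d' Hl).
Qed.

Variables (Z : nat -> Path -> Path -> C) (Hws : weight_seq src rg Z).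
Local Notation Zop := (@Zop R E0 E1 src rg Z).
Local Notation wact := (@wact R E0 E1 src rg).
Local Notation tact := (@tact R E0 E1 src rg).

Lemma Z_rng k d g : d \in ps k -> g \in ps k -> prng d != prng g -> Z k d g = 0.
Proof.
move=> Hd Hg Hne.
case: Hws => _ [HL _].
have := HL k (fun v => if v == prng g then 1 else 0) (delta g) d.
rewrite mem_ps in Hd; case/andP: Hd => Hd /eqP Hk.
move=> /(_ Hd Hk); rewrite /lact !wactE.
under eq_bigr do rewrite mulrA.
rewrite !sum_delta // eqxx (negbTE Hne) mulr1 mul0r.
by [].
Qed.

Lemma conjc_delta e h : conjc (delta e h) = delta e h.
Proof. by rewrite /delta; case: (h == e); rewrite ?conjc1 ?conjc0. Qed.

Lemma Z_src k d g : d \in ps k -> g \in ps k -> psrc d != psrc g -> Z k d g = 0.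
Proof.
move=> Hd Hg Hne.
case: Hws => [HA _].
case: (HA k) => W HW.
have := HW (delta g) (delta d) (psrc d).
rewrite !kinnerAE.
rewrite (@sum_delta_cond _ _ _ (fun h => conjc (wact Z k (delta g) h))) // eqxx.
rewrite wactE sum_delta //.
under [X in _ = X]eq_bigr do rewrite conjc_delta mulrC.
rewrite (@sum_delta_cond _ _ _ (fun h => wact W k (delta d) h)) //.
rewrite eq_sym (negbTE Hne) => /eqP.
by rewrite conjc_eq0 => /eqP.
Qed.

Lemma Zbound : exists M, 0 <= M /\ forall k x, knorm k (wact Z k x) <= M * knorm k x.
Proof.
case: Hws => _ [_ [_ [[M HM] _]]].
case: (lerP 0 M) => HM0; first by exists M.
exists 0; split => // k x.
apply: le_trans (HM k x) _.
by rewrite mul0r mulr_le0_ge0 ?knorm_ge0 // ltW.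
Qed.

Lemma ZopE x d : is_path d -> Zop x d = wact Z (plen d) x d.
Proof. by rewrite /Defs.Zop => ->. Qed.

Lemma knorm_Zop k x : knorm k (Zop x) = knorm k (wact Z k x).
Proof.
apply: knorm_ext => d; rewrite mem_ps => /andP[Hd /eqP Hk].
by rewrite ZopE // Hk.
Qed.
Local Notation Op := (Op R E0 E1).

Definition trunc N x : Vec := fun d => if (plen d < N)%N then x d else 0.

Lemma trunc_lin N (c : C) x y :
  trunc N (fun d => c * x d + y d) = fun d => c * trunc N x d + trunc N y d.
Proof. by apply: functional_extensionality => d; rewrite /trunc; case: ifP; rewrite ?mulr0 ?addr0. Qed.

Lemma trunc_ract N x b : trunc N (ract x b) = ract (trunc N x) b.
Proof. by apply: functional_extensionality => d; rewrite /trunc /ract; case: ifP; rewrite ?mul0r. Qed.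

Lemma sqn_trunc N x d : sqn (trunc N x d) <= sqn (x d).
Proof. by rewrite /trunc; case: ifP; rewrite ?sqn0 ?sqn_ge0. Qed.

Lemma en_le K x y : (forall d, sqn (x d) <= sqn (y d)) -> en K x <= en K y.
Proof. by move=> H; apply: ler_sum => k _; apply: knorm_le => d _; apply: H. Qed.

Lemma bounded_gen (T : Op) B :
  (forall x d, ~~ is_path d -> T x d = 0) ->
  (forall (c : C) x y, T (fun d => c * x d + y d) = (fun d => c * T x d + T y d)) ->
  (forall x c, l2le x c -> l2le (T x) (B * c)) -> bounded_op src rg T.
Proof.
move=> H0 Hlin HB; split; [|split].
- move=> x [Hx [c Hc]]; split; first exact: H0.
  by exists (B * c); apply: HB.
- by move=> c x y _ _; apply: Hlin.
- by exists B => x c _; apply: HB.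
Qed.

Lemma l2_delta e : is_path e -> l2 src rg (delta e).
Proof.
move=> He; split.
  move=> d Hd; rewrite /delta; case: eqP => // Hde.
  by rewrite Hde He in Hd.
exists 1 => s Us.
have -> : (1 : R) = \sum_(d <- [:: e]) 1 by rewrite big_seq1.
apply: (@sum_inj_le _ _ _ _ (fun d => sqn (delta e d)) (fun _ => e) (fun _ => 1)) => //.
- move=> d _; rewrite /delta; case: (d =P e) => [_ _|_ /=]; last by rewrite sqn0 eqxx.
  by rewrite mem_seq1 eqxx /sqn Normc.normc1 expr1n.
- move=> i j _ _; rewrite /delta.
  case: (i =P e) => [-> _|_ /=]; last by rewrite sqn0 eqxx.
  by case: (j =P e) => [-> _|_ /=]; last by rewrite sqn0 eqxx.
Qed.

Lemma compact_gen (T : Op) :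
  (forall x d, ~~ is_path d -> T x d = 0) ->
  (forall (c : C) x y, T (fun d => c * x d + y d) = (fun d => c * T x d + T y d)) ->
  (forall x b, T (ract x b) = ract (T x) b) ->
  (forall N x, (forall d, (N <= plen d)%N -> x d = 0) ->
     forall d, (N + p <= plen d)%N -> T x d = 0) ->
  (exists B, 0 <= B /\ forall x K, en K (T x) <= B * en (K + p) x) ->
  (forall eps, 0 < eps -> exists N, forall x, (forall d, (plen d < N)%N -> x d = 0) ->
     forall K, en K (T x) <= eps * en (K + p) x) ->
  compact_op src rg T.
Proof.
move=> H0 Hlin Hmod Hfin [B [B0 HB]] Hsm.
have HT : forall x c, l2le x c -> l2le (T x) (B * c).
  move=> x c Hx; apply: LD2 => [d|K]; first exact: H0.
  apply: le_trans (HB x K) _; apply: ler_wpM2l => //; exact: (@LD1 x c Hx (K + p)).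
split; first exact: (@bounded_gen T (B) H0 Hlin HT).
move=> eps Heps; case: (Hsm eps Heps) => N HN.
exists (fun x => T (trunc N x)); split; [|split; [|split]].
- apply: (@bounded_gen _ B) => [x d Hd|c x y|x c Hx]; first exact: H0.
    by rewrite trunc_lin Hlin.
  by apply: HT; apply: l2le_le Hx => d; apply: sqn_trunc.
- by move=> x b _; rewrite trunc_ract Hmod.
- set s := pathsK (N + p).
  exists (size s), (fun i => delta (tnth (in_tuple s) i)); split.
    move=> i; apply: l2_delta.
    by have := mem_tnth i (in_tuple s); rewrite mem_pathsK => /andP[].
  move=> x Hx; exists (fun i => T (trunc N x) (tnth (in_tuple s) i)).
  apply: functional_extensionality => d.
  case Hd: (d \in s).
    have Hi : (index d s < size s)%N by rewrite index_mem.
    rewrite (bigD1 (Ordinal Hi)) //= big1 ?addr0.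
      by rewrite (tnth_nth d) /= nth_index // /delta eqxx mulr1.
    move=> j Hj; rewrite /delta; case: eqP; last by rewrite mulr0.
    move=> Ej; case/eqP: Hj; apply: val_inj => /=.
    by rewrite Ej (tnth_nth d) /= index_uniq // uniq_pathsK.
  rewrite big1; last first.
    move=> i _; rewrite /delta; case: eqP; last by rewrite mulr0.
    by move=> Ed; move: (mem_tnth i (in_tuple s)); rewrite -Ed Hd.
  move: Hd; rewrite mem_pathsK; case: (boolP (is_path d)) => Hp /= Hl; last exact: H0.
  move/negbT: Hl; rewrite -leqNgt => Hl.
  apply: (Hfin N) => // e He; rewrite /trunc; case: ifP => // Hlt.
  by rewrite ltnNge He in Hlt.
- move=> x c Hx Hc.
  have -> : (fun d => T x d - T (trunc N x) d) = T (fun d => -1 * trunc N x d + x d).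
    by rewrite Hlin; apply: functional_extensionality => d; rewrite mulN1r addrC.
  apply: LD2 => [d|K]; first exact: H0.
  apply: le_trans (HN _ _ K) _.
    by move=> d Hd; rewrite /trunc Hd mulN1r addNr.
  apply: ler_wpM2l; first exact: ltW.
  apply: le_trans (@LD1 x c Hc (K + p)).
  apply: en_le => d; rewrite /trunc; case: ifP => _.
    by rewrite mulN1r addNr sqn0 sqn_ge0.
  by rewrite mulr0 add0r.
Qed.
Definition T1 a : Op := opsub (opcomp (Sop a) Zop) (opcomp Zop (Sop a)).
Definition T2 a : Op := opsub (opcomp (Sadj a) Zop) (opcomp Zop (Sadj a)).

Lemma Sop_lin a (c : C) x y :
  Sop a (fun d => c * x d + y d) = fun d => c * Sop a x d + Sop a y d.
Proof. by apply: functional_extensionality => d; rewrite /Defs.Sop; case: ifP; rewrite ?mulr0 ?addr0. Qed.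

Lemma Sadj_lin a (c : C) x y :
  Sadj a (fun d => c * x d + y d) = fun d => c * Sadj a x d + Sadj a y d.
Proof. by apply: functional_extensionality => d; rewrite /Defs.Sadj; case: ifP; rewrite ?mulr0 ?addr0. Qed.

Lemma Zop_lin (c : C) x y :
  Zop (fun d => c * x d + y d) = fun d => c * Zop x d + Zop y d.
Proof.
apply: functional_extensionality => d; rewrite /Defs.Zop; case: ifP; rewrite ?mulr0 ?addr0 // => _.
rewrite !wactE mulr_sumr -big_split; apply: eq_bigr => g _.
by rewrite mulrDr mulrCA.
Qed.

Lemma opsub_lin (A B : Op) :
  (forall (c : C) x y, A (fun d => c * x d + y d) = fun d => c * A x d + A y d) ->
  (forall (c : C) x y, B (fun d => c * x d + y d) = fun d => c * B x d + B y d) ->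
  forall (c : C) x y, opsub A B (fun d => c * x d + y d) = fun d => c * opsub A B x d + opsub A B y d.
Proof.
move=> HA HB c x y; apply: functional_extensionality => d.
by rewrite /opsub HA HB; ring.
Qed.

Lemma T1_lin a (c : C) x y : T1 a (fun d => c * x d + y d) = fun d => c * T1 a x d + T1 a y d.
Proof.
apply: opsub_lin => c' x' y'; rewrite /opcomp.
  by rewrite Zop_lin Sop_lin.
by rewrite Sop_lin Zop_lin.
Qed.

Lemma T2_lin a (c : C) x y : T2 a (fun d => c * x d + y d) = fun d => c * T2 a x d + T2 a y d.
Proof.
apply: opsub_lin => c' x' y'; rewrite /opcomp.
  by rewrite Zop_lin Sadj_lin.
by rewrite Sadj_lin Zop_lin.
Qed.

Lemma Zop_npath x d : ~~ is_path d -> Zop x d = 0.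
Proof. by move=> H; rewrite /Defs.Zop (negbTE H). Qed.

Lemma Sadj_npath a x d : ~~ is_path d -> Sadj a x d = 0.
Proof. by move=> H; rewrite /Defs.Sadj (negbTE H). Qed.

Lemma T1_npath a x d : ~~ is_path d -> T1 a x d = 0.
Proof. by move=> H; rewrite /T1 /opsub /opcomp Sop_npath // Zop_npath // subr0. Qed.

Lemma T2_npath a x d : ~~ is_path d -> T2 a x d = 0.
Proof. by move=> H; rewrite /T2 /opsub /opcomp Sadj_npath // Zop_npath // subr0. Qed.

Lemma Sop_ract a x b : Sop a (ract x b) = ract (Sop a x) b.
Proof. by apply: functional_extensionality => d; rewrite /Defs.Sop /ract; case: ifP; rewrite ?mul0r. Qed.

Lemma Sadj_ract a x b : Sadj a (ract x b) = ract (Sadj a x) b.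
Proof. by apply: functional_extensionality => d; rewrite /Defs.Sadj /ract; case: ifP; rewrite ?mul0r. Qed.

Lemma Zop_ract x b : Zop (ract x b) = ract (Zop x) b.
Proof.
apply: functional_extensionality => d; rewrite /Defs.Zop /ract.
case: ifP => Hd; last by rewrite mul0r.
rewrite !wactE mulr_suml; apply: eq_big_seq => g Hg.
case: (psrc g =P psrc d) => [->|Hne]; first by rewrite mulrA.
rewrite Z_src ?mul0r //; first by rewrite mem_ps Hd eqxx.
by rewrite eq_sym; apply/eqP.
Qed.

Lemma T1_ract a x b : T1 a (ract x b) = ract (T1 a x) b.
Proof.
apply: functional_extensionality => d.
by rewrite /T1 /opsub /opcomp Zop_ract Sop_ract Sop_ract Zop_ract /ract mulrBl.
Qed.

Lemma T2_ract a x b : T2 a (ract x b) = ract (T2 a x) b.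
Proof.
apply: functional_extensionality => d.
by rewrite /T2 /opsub /opcomp Zop_ract Sadj_ract Sadj_ract Zop_ract /ract mulrBl.
Qed.

Lemma sqnB (u v : C) : sqn (u - v) <= 2 * (sqn u + sqn v).
Proof. by rewrite -(sqnN v) sqnD. Qed.

Lemma knorm_sub k x y : knorm k (fun d => x d - y d) <= 2 * (knorm k x + knorm k y).
Proof.
rewrite !knormE -big_split mulr_sumr /=; apply: ler_sum => d _; exact: sqnB.
Qed.

Lemma Sop_short a x g : is_path a -> plen a = p -> is_path g -> (plen g < p)%N -> Sop a x g = 0.
Proof.
move=> Ha Hl Hg Hs; rewrite Sop_path //.
rewrite take_oversize; last by apply: ltnW.
case: eqP => // E; move: Hs; by rewrite /plen E -/(plen a) Hl ltnn.
Qed.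

Lemma wact_zero W k x d : (forall g, g \in ps k -> x g = 0) -> wact W k x d = 0.
Proof. by move=> H; rewrite wactE big_seq big1 // => g /H ->; rewrite mulr0. Qed.
Lemma T1_low a x m : is_path a -> plen a = p -> (m < p)%N -> knorm m (T1 a x) = 0.
Proof.
move=> Ha Hl Hm; rewrite knormE big_seq big1 // => d; rewrite mem_ps => /andP[Hd /eqP Hk].
rewrite /T1 /opsub /opcomp Sop_short ?Hk // ZopE // (@wact_zero Z (plen d) (Sop a x) d) ?subr0 ?sqn0 //.
by move=> g; rewrite mem_ps => /andP[Hg /eqP Hgk]; rewrite Sop_short ?Hgk ?Hk.
Qed.

Lemma T1_fin a N x : is_path a -> plen a = p ->
  (forall d, (N <= plen d)%N -> x d = 0) -> forall d, (N + p <= plen d)%N -> T1 a x d = 0.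
Proof.
move=> Ha Hl Hx d Hd.
case: (boolP (is_path d)) => Hp; last by rewrite T1_npath.
rewrite /T1 /opsub /opcomp Sop_path // [Zop (Sop a x) d]ZopE // (@wact_zero Z (plen d) (Sop a x) d); last first.
  move=> g; rewrite mem_ps => /andP[Hg /eqP Hgk].
  rewrite Sop_path //; case: ifP => // _; apply: Hx.
  rewrite plen_pdrop Hgk; move: Hd; clear; lia.
rewrite ZopE ?pdrop_path // (@wact_zero Z (plen (pdrop p d)) x (pdrop p d)) ?subr0; first by case: ifP.
move=> g; rewrite mem_ps => /andP[Hg /eqP Hgk]; apply: Hx.
rewrite Hgk plen_pdrop; move: Hd; clear; lia.
Qed.

Lemma Sop_Zop_tact a x k d : is_path a -> plen a = p -> d \in ps (k + p) ->
  Sop a (Zop x) d = tact Z p k (Sop a x) d.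
Proof.
move=> Ha Hl; rewrite mem_ps => /andP[Hd /eqP Hk].
have Hdr : pdrop p d \in ps k by rewrite mem_ps pdrop_path //= plen_pdrop Hk addnK.
have Htk : plen (ptake p d) = p by rewrite plen_ptake // Hk leq_addl.
rewrite Sop_path // tactE.
have E : forall g, g \in ps k -> prng g == prng (pdrop p d) ->
    Sop a x (pcat (ptake p d) g) = if take p d.2 == a.2 then x g else 0.
  move=> g; rewrite mem_ps => /andP[Hg _] /eqP Hgr.
  rewrite Sop_path //; last by apply: pcat_path => //; apply: ptake_path.
  rewrite (@pdrop_pcat p (ptake p d) g Htk) /pcat /=.
  rewrite take_size_cat //.
rewrite big_seq_cond (eq_bigr (fun g => Z k (pdrop p d) g * (if take p d.2 == a.2 then x g else 0))); last first.
  by move=> g /andP[Hg Hr]; rewrite E.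
rewrite -big_seq_cond.
case: ifP => _; last by rewrite big1 // => g _; rewrite mulr0.
rewrite ZopE ?pdrop_path // plen_pdrop Hk addnK wactE.
rewrite [in RHS]big_mkcond /=; apply: eq_big_seq => g Hg.
case: eqP => // Hne; rewrite Z_rng ?mul0r //.
by rewrite eq_sym; apply/eqP.
Qed.

Lemma T1_tact a x k d : is_path a -> plen a = p -> d \in ps (k + p) ->
  T1 a x d = tact Z p k (Sop a x) d - wact Z (k + p) (Sop a x) d.
Proof.
move=> Ha Hl Hd; rewrite /T1 /opsub /opcomp (@Sop_Zop_tact a x k d Ha Hl Hd).
move: Hd; rewrite mem_ps => /andP[Hd /eqP Hk].
by rewrite ZopE // Hk.
Qed.

Variable M : R.
Hypothesis M0 : 0 <= M.
Hypothesis HM : forall k x, knorm k (wact Z k x) <= M * knorm k x.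

Lemma T1_bound a x k : is_path a -> plen a = p ->
  knorm (k + p) (T1 a x) <= 2 * (M + M) * knorm k x.
Proof.
move=> Ha Hl.
rewrite /T1 /opsub /opcomp.
apply: le_trans (knorm_sub (k + p) (Sop a (Zop x)) (Zop (Sop a x))) _.
rewrite -mulrA ler_wpM2l // mulrDl.
apply: lerD.
  apply: le_trans (@K1 a (Zop x) k Ha Hl) _.
  by rewrite knorm_Zop HM.
rewrite knorm_Zop; apply: le_trans (HM _ _) _.
rewrite ler_wpM2l //; exact: (@K1 a x k Ha Hl).
Qed.
Lemma T2_fin a N x : is_path a -> plen a = p ->
  (forall d, (N <= plen d)%N -> x d = 0) -> forall d, (N + p <= plen d)%N -> T2 a x d = 0.
Proof.
move=> Ha Hl Hx d Hd.
case: (boolP (is_path d)) => Hp; last by rewrite T2_npath.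
rewrite /T2 /opsub /opcomp [Zop (Sadj a x) d]ZopE // (@wact_zero Z (plen d) (Sadj a x) d); last first.
  move=> g; rewrite mem_ps => /andP[Hg /eqP Hgk].
  rewrite /Defs.Sadj; case: ifP => // _; apply: Hx.
  rewrite plen_pcat Hgk; move: Hd; clear; lia.
rewrite subr0 /Defs.Sadj Hp /=; case: ifP => // _.
rewrite /Defs.Zop; case: ifP => // _.
rewrite (@wact_zero Z (plen (pcat a d)) x (pcat a d)) // => g.
rewrite mem_ps plen_pcat => /andP[_ /eqP Hgk]; apply: Hx.
rewrite Hgk; move: Hd; clear; lia.
Qed.

Lemma T2_tact a x m g : is_path a -> plen a = p -> g \in ps m ->
  T2 a x g = Sadj a (fun d => wact Z (m + p) x d - tact Z p m x d) g.
Proof.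
move=> Ha Hl Hgm; move: (Hgm); rewrite mem_ps => /andP[Hg /eqP Hm].
have Ez : Zop (Sadj a x) g = if prng g == psrc a then
    \sum_(h <- ps m | prng h == prng g) Z m g h * x (pcat a h) else 0.
  rewrite ZopE // Hm wactE.
  case: (prng g =P psrc a) => Hr.
    rewrite [RHS]big_mkcond; apply: eq_big_seq => h Hh.
    move: (Hh); rewrite mem_ps => /andP[Hhp _].
    rewrite /Defs.Sadj Hhp /=.
    case: (prng h =P prng g) => Hhg; first by rewrite Hhg Hr eqxx.
    rewrite Z_rng ?mul0r //; apply/eqP => E; apply: Hhg; by rewrite E.
  rewrite big_seq big1 // => h Hh.
  rewrite /Defs.Sadj; case: ifP => [/andP[_ /eqP Hha]|_]; last by rewrite mulr0.
  rewrite Z_rng ?mul0r //; apply/eqP => E; apply: Hr; by rewrite E Hha.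
have Et : tact Z p m x (pcat a g) =
    \sum_(h <- ps m | prng h == prng g) Z m g h * x (pcat a h).
  by rewrite tactE (@pdrop_pcat p a g Hl) (@ptake_pcat p a g Hl).
rewrite /T2 /opsub /opcomp Ez.
rewrite /Defs.Sadj Hg /=.
case: (prng g =P psrc a) => Hr /=; last by rewrite subr0.
rewrite Et ZopE; last by apply: pcat_path.
by rewrite plen_pcat Hm Hl addnC.
Qed.

Lemma T2_bound a x m : is_path a -> plen a = p ->
  knorm m (T2 a x) <= 2 * (M + M) * knorm (m + p) x.
Proof.
move=> Ha Hl.
rewrite /T2 /opsub /opcomp.
apply: le_trans (knorm_sub m (Sadj a (Zop x)) (Zop (Sadj a x))) _.
rewrite -mulrA ler_wpM2l // mulrDl.
apply: lerD.
  apply: le_trans (@K1' a (Zop x) m Ha Hl) _.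
  by rewrite knorm_Zop HM.
rewrite knorm_Zop; apply: le_trans (HM _ _) _.
rewrite ler_wpM2l //; exact: (@K1' a x m Ha Hl).
Qed.

Lemma en_mono K K' x : (K <= K')%N -> en K x <= en K' x.
Proof.
move=> HK; rewrite /en (@big_cat_nat _ _ _ K 0 K') //= lerDl.
by rewrite sumr_ge0 // => k _; apply: knorm_ge0.
Qed.

Lemma en_up f g (b : R) K : 0 <= b -> (forall m, (m < p)%N -> knorm m f = 0) ->
  (forall k, knorm (k + p) f <= b * knorm k g) -> en K f <= b * en (K + p) g.
Proof.
move=> b0 Hlow Hup.
apply: le_trans (@en_mono K (K + p) f (leq_addr p K)) _.
rewrite /en (@big_cat_nat _ _ _ p 0 (K + p)) ?leq_addl //=.
rewrite big_nat big1 ?add0r; last by move=> m /andP[_ Hm]; apply: Hlow.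
have E : \sum_(0 + p <= k < K + p) knorm k f = \sum_(0 <= m < K) knorm (m + p) f.
  by rewrite big_addn addnK.
rewrite add0n in E; rewrite E.
apply: le_trans (_ : \sum_(0 <= k < K) b * knorm k g <= _).
  by apply: ler_sum => k _; apply: Hup.
rewrite -mulr_sumr ler_wpM2l //.
exact: (@en_mono K (K + p) g (leq_addr p K)).
Qed.

Lemma en_down f g (b : R) K : 0 <= b ->
  (forall m, knorm m f <= b * knorm (m + p) g) -> en K f <= b * en (K + p) g.
Proof.
move=> b0 Hd.
rewrite /en; apply: le_trans (_ : \sum_(0 <= m < K) b * knorm (m + p) g <= _).
  by apply: ler_sum => m _; apply: Hd.
rewrite -mulr_sumr ler_wpM2l //.
have E : \sum_(0 + p <= k < K + p) knorm k g = \sum_(0 <= m < K) knorm (m + p) g.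
  by rewrite big_addn addnK.
rewrite add0n in E; rewrite -E.
rewrite (@big_cat_nat _ _ _ p 0 (K + p)) ?leq_addl //= lerDr.
by rewrite sumr_ge0 // => k _; apply: knorm_ge0.
Qed.

Lemma knorm_swap k x y : knorm k (fun d => x d - y d) = knorm k (fun d => y d - x d).
Proof. by rewrite !knormE; apply: eq_bigr => d _; rewrite -opprB sqnN. Qed.

Lemma knorm_zero k x : (forall d, d \in ps k -> x d = 0) -> knorm k x = 0.
Proof. by move=> H; rewrite knormE big_seq big1 // => d /H ->; rewrite sqn0. Qed.

Lemma dir1_T1 a : is_path a -> plen a = p -> condA src rg Z p -> compact_op src rg (T1 a).
Proof.
move=> Ha Hl HA.
have B0 : 0 <= 2 * (M + M) by rewrite mulr_ge0 // addr_ge0.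
apply: compact_gen.
- by move=> x d; apply: T1_npath.
- by move=> c x y; apply: T1_lin.
- by move=> x b; apply: T1_ract.
- by move=> N x Hx d Hd; apply: (@T1_fin a N x Ha Hl Hx d Hd).
- exists (2 * (M + M)); split => // x K.
  apply: en_up => // [m Hm|k]; first exact: T1_low.
  exact: T1_bound.
- move=> eps Heps; case: (HA eps Heps) => N HN.
  exists N => x Hx K.
  apply: en_up => [|m Hm|k]; first exact: ltW.
    exact: T1_low.
  case: (leqP N k) => Hk.
    rewrite (@knorm_ext (k + p) (T1 a x)
       (fun d => tact Z p k (Sop a x) d - wact Z (k + p) (Sop a x) d)); last first.
      by move=> d Hd; apply: T1_tact.
    apply: le_trans (HN k Hk (Sop a x)) _.
    apply: ler_wpM2l; [exact: ltW | exact: (@K1 a x k Ha Hl)].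
  have Hk0 : knorm k x = 0.
    by apply: knorm_zero => d; rewrite mem_ps => /andP[_ /eqP Hd]; apply: Hx; rewrite Hd.
  rewrite Hk0 mulr0; apply: le_trans (@T1_bound a x k Ha Hl) _.
  by rewrite Hk0 mulr0.
Qed.

Lemma dir1_T2 a : is_path a -> plen a = p -> condA src rg Z p -> compact_op src rg (T2 a).
Proof.
move=> Ha Hl HA.
have B0 : 0 <= 2 * (M + M) by rewrite mulr_ge0 // addr_ge0.
apply: compact_gen.
- by move=> x d; apply: T2_npath.
- by move=> c x y; apply: T2_lin.
- by move=> x b; apply: T2_ract.
- by move=> N x Hx d Hd; apply: (@T2_fin a N x Ha Hl Hx d Hd).
- exists (2 * (M + M)); split => // x K.
  apply: en_down => // m.
  exact: T2_bound.
- move=> eps Heps; case: (HA eps Heps) => N HN.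
  exists (N + p)%N => x Hx K.
  apply: en_down => [|m]; first exact: ltW.
  case: (leqP N m) => Hm.
    rewrite (@knorm_ext m (T2 a x)
       (Sadj a (fun d => wact Z (m + p) x d - tact Z p m x d))); last first.
      by move=> d Hd; apply: T2_tact.
    apply: le_trans (@K1' a _ m Ha Hl) _.
    rewrite knorm_swap; exact: HN.
  have Hk0 : knorm (m + p) x = 0.
    apply: knorm_zero => d; rewrite mem_ps => /andP[_ /eqP Hd]; apply: Hx.
    by rewrite Hd ltn_add2r.
  rewrite Hk0 mulr0; apply: le_trans (@T2_bound a x m Ha Hl) _.
  by rewrite Hk0 mulr0.
Qed.
Definition supp k x := forall d, d \notin ps k -> x d = 0.

Lemma sum_pick (r : seq nat) (n : nat) (F : nat -> R) : uniq r ->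
  \sum_(i <- r) (if n == i then F i else 0) = if n \in r then F n else 0.
Proof.
move=> Ur; case: (boolP (n \in r)) => Hn.
  rewrite (bigD1_seq n) //= eqxx big1 ?addr0 // => i /negPf.
  by rewrite eq_sym => ->.
rewrite big_seq big1 // => i Hi; case: eqP => // E.
by rewrite E Hi in Hn.
Qed.

Lemma knorm_scale k (c : C) x : knorm k (fun d => c * x d) = sqn c * knorm k x.
Proof. by rewrite !knormE mulr_sumr; apply: eq_bigr => d _; rewrite sqnM. Qed.

Lemma supp_scale k (c : C) x : supp k x -> supp k (fun d => c * x d).
Proof. by move=> H d Hd; rewrite H ?mulr0. Qed.

Lemma knorm_sumY (m : nat) (e : 'I_m -> nat) (Y : 'I_m -> Vec) k :
  injective e -> (forall j, supp (e j) (Y j)) ->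
  knorm k (fun d => \sum_j Y j d) = \sum_j (if e j == k then knorm k (Y j) else 0).
Proof.
move=> Hinj HY.
case: (pickP (fun j => e j == k)) => [j0 /eqP Hj0|Hnone].
  rewrite (bigD1 j0) //= Hj0 eqxx big1 ?addr0; last first.
    move=> j Hj; case: eqP => // E; case/eqP: Hj; apply: Hinj; by rewrite E.
  apply: knorm_ext => d Hd; rewrite (bigD1 j0) //= big1 ?addr0 // => j Hj.
  apply: HY; apply/negP; rewrite mem_ps => /andP[_ /eqP Ed].
  move: Hd; rewrite mem_ps => /andP[_ /eqP Ed'].
  case/eqP: Hj; apply: Hinj; by rewrite -Ed Ed' Hj0.
rewrite big1; last by move=> j _; rewrite Hnone.
apply: knorm_zero => d Hd; rewrite big1 // => j _.
apply: HY; apply/negP; rewrite mem_ps => /andP[_ /eqP Ed].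
move: Hd; rewrite mem_ps => /andP[_ /eqP Ed'].
by move: (Hnone j); rewrite -Ed Ed' eqxx.
Qed.

Lemma en_sumY (m : nat) (e : 'I_m -> nat) (Y : 'I_m -> Vec) K :
  injective e -> (forall j, supp (e j) (Y j)) ->
  en K (fun d => \sum_j Y j d) = \sum_j (if (e j < K)%N then knorm (e j) (Y j) else 0).
Proof.
move=> Hinj HY; rewrite /en.
under eq_bigr => k _ do rewrite (@knorm_sumY m e Y k Hinj HY).
rewrite exchange_big /=; apply: eq_bigr => j _.
rewrite (@sum_pick _ (e j) (fun k => knorm k (Y j))) ?iota_uniq //.
by rewrite mem_index_iota leq0n.
Qed.

Lemma en_supp k x K : supp k x -> en K x = if (k < K)%N then knorm k x else 0.
Proof.
move=> Hx.
have Hi : injective (fun _ : 'I_1 => k) by move=> i j _; rewrite !ord1.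
have := @en_sumY 1 (fun _ => k) (fun _ => x) K Hi (fun _ => Hx).
have -> : (fun d => \sum_(j < 1) (fun _ : 'I_1 => x) j d) = x.
  by apply: functional_extensionality => d; rewrite big_ord1.
by rewrite big_ord1.
Qed.

Lemma l2_supp k x : supp k x -> l2 src rg x.
Proof.
move=> Hx; split.
  by move=> d Hd; apply: Hx; rewrite mem_ps negb_and Hd.
exists (knorm k x); apply: LD2 => [d Hd|K].
  by apply: Hx; rewrite mem_ps negb_and Hd.
rewrite (@en_supp k x K Hx); case: ifP => // _; exact: knorm_ge0.
Qed.

Lemma l2_lin (c : C) x y : l2 src rg x -> l2 src rg y -> l2 src rg (fun d => c * x d + y d).
Proof.
move=> [Hx0 [cx Hx]] [Hy0 [cy Hy]]; split.
  by move=> d Hd; rewrite Hx0 // Hy0 // mulr0 addr0.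
exists (2 * (sqn c * cx + cy)) => s Us.
apply: le_trans (_ : \sum_(d <- s) 2 * (sqn c * sqn (x d) + sqn (y d)) <= _).
  by apply: ler_sum => d _; rewrite -sqnM; apply: sqnD.
rewrite -mulr_sumr ler_wpM2l // big_split /= -mulr_sumr.
apply: lerD; last exact: Hy.
by rewrite ler_wpM2l ?sqn_ge0 //; apply: Hx.
Qed.

Lemma l2_zero : l2 src rg (fun _ : Path => (0 : C)).
Proof.
split => //; exists 0 => s _; rewrite big1 // => d _; exact: sqn0.
Qed.

Lemma lin_sum (T : Op) :
  (forall (c : C) x y, l2 src rg x -> l2 src rg y ->
     T (fun d => c * x d + y d) = fun d => c * T x d + T y d) ->
  forall (I : Type) (r : seq I) (lam : I -> C) (X : I -> Vec),
  (forall j, l2 src rg (X j)) ->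
  l2 src rg (fun d => \sum_(j <- r) lam j * X j d) /\
  T (fun d => \sum_(j <- r) lam j * X j d) = fun d => \sum_(j <- r) lam j * T (X j) d.
Proof.
move=> Hlin I r lam X HX; elim: r => [|j r [IHl IHe]].
  have E : (fun d : Path => \sum_(j <- [::]) lam j * X j d) = fun _ => 0.
    by apply: functional_extensionality => d; rewrite big_nil.
  rewrite E; split; first exact: l2_zero.
  have := Hlin (-1) _ _ l2_zero l2_zero.
  have -> : (fun d : Path => -1 * (0 : C) + 0) = fun _ => 0.
    by apply: functional_extensionality => d; rewrite mulr0 addr0.
  move=> ->; apply: functional_extensionality => d.
  by rewrite big_nil mulN1r addNr.
have E : (fun d => \sum_(i <- j :: r) lam i * X i d) =
    fun d => lam j * X j d + \sum_(i <- r) lam i * X i d.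
  by apply: functional_extensionality => d; rewrite big_cons.
rewrite E; split; first exact: l2_lin.
rewrite Hlin // IHe; apply: functional_extensionality => d.
by rewrite big_cons.
Qed.
Lemma C1_gen (T : Op) : compact_op src rg T ->
  (forall k x, supp k x -> supp (k + p) (T x)) ->
  forall del, 0 < del -> exists N, forall k, (N <= k)%N -> forall x, supp k x ->
    knorm (k + p) (T x) <= del * knorm k x.
Proof.
move=> [[_ [HTlin _]] Hcpt] HP del Hdel.
apply: NNPP => Hneg.
have H1 : forall N, exists kx : nat * Vec, [/\ (N <= kx.1)%N, supp kx.1 kx.2 &
    del * knorm kx.1 kx.2 < knorm (kx.1 + p) (T kx.2)].
  move=> N; apply: NNPP => H2; apply: Hneg; exists N => k Hk x Hx.
  rewrite leNgt; apply/negP => Hlt; apply: H2; by exists (k, x).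
pose f N := proj1_sig (constructive_indefinite_description _ (H1 N)).
have Hf : forall N, [/\ (N <= (f N).1)%N, supp (f N).1 (f N).2 &
    del * knorm (f N).1 (f N).2 < knorm ((f N).1 + p) (T (f N).2)].
  move=> N; exact: (proj2_sig (constructive_indefinite_description _ (H1 N))).
pose Nn j := iter j (fun N => ((f N).1).+1) 0%N.
pose dg j := (f (Nn j)).1.
pose X j := (f (Nn j)).2.
have dgS : forall j, (dg j < dg j.+1)%N.
  by move=> j; case: (Hf (Nn j.+1)) => H _ _; exact: H.
have dg_mono : forall i j, (i < j)%N -> (dg i < dg j)%N.
  move=> i j; elim: j => // j IH; rewrite ltnS leq_eqVlt => /orP[/eqP ->|/IH H].
    exact: dgS.
  exact: ltn_trans H (dgS j).
have dg_inj : forall i j, dg i = dg j -> i = j.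
  move=> i j E; case: (ltngtP i j) => // H.
    by have := dg_mono _ _ H; rewrite E ltnn.
  by have := dg_mono _ _ H; rewrite E ltnn.
have HX : forall j, supp (dg j) (X j) by move=> j; case: (Hf (Nn j)).
have HXlt : forall j, del * knorm (dg j) (X j) < knorm (dg j + p) (T (X j)).
  by move=> j; case: (Hf (Nn j)).
case: (Hcpt del Hdel) => F [[_ [HFlin _]] [_ [[n [v [Hv Hfr]]] Herr]]].
have Hl2X : forall j, l2 src rg (X j) by move=> j; exact: (@l2_supp _ _ (HX j)).
have Hc : forall j : 'I_n.+1, exists c : 'I_n -> C, F (X j) = (fun d => \sum_i c i * v i d).
  by move=> j; apply: Hfr.
pose cc j := proj1_sig (constructive_indefinite_description _ (Hc j)).
have Hcc : forall j : 'I_n.+1, F (X j) = (fun d => \sum_i cc j i * v i d).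
  by move=> j; exact: (proj2_sig (constructive_indefinite_description _ (Hc j))).
pose A : 'M[C]_(n.+1, n) := \matrix_(j, i) cc j i.
have HK : kermx A != 0.
  rewrite kermx_eq0 /row_free; apply/negP => /eqP Hr.
  by have := rank_leq_col A; rewrite Hr ltnn.
case/matrix0Pn: HK => r [jc Hjc].
pose lam (j : 'I_n.+1) := kermx A r j.
have Hlam : forall i, \sum_j lam j * cc j i = 0.
  move=> i; have := congr1 (fun B : 'M[C]_(n.+1, n) => B r i) (mulmx_ker A).
  rewrite !mxE => H; apply: (etrans _ H); apply: eq_bigr => j _; by rewrite [A j i]mxE.
pose y := fun d => \sum_j lam j * X j d.
have dg_inj' : injective (fun j : 'I_n.+1 => dg j).
  by move=> i j E; apply: val_inj; apply: dg_inj.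
case: (@lin_sum T HTlin _ (index_enum 'I_n.+1) lam X (fun j => Hl2X j)) => Hy HTy.
case: (@lin_sum F HFlin _ (index_enum 'I_n.+1) lam X (fun j => Hl2X j)) => _ HFy.
have HFy0 : F y = fun _ => 0.
  rewrite /y HFy; apply: functional_extensionality => d.
  under eq_bigr => j _ do rewrite Hcc /= mulr_sumr.
  rewrite exchange_big big1 // => i _.
  under eq_bigr => j _ do rewrite mulrA.
  by rewrite -mulr_suml Hlam mul0r.
set c0 := \sum_j sqn (lam j) * knorm (dg j) (X j).
have Hyc : l2le y c0.
  apply: LD2 => [d Hd|K]; first by case: Hy => H _; exact: H.
  have := @en_sumY n.+1 (fun j => dg j) (fun j d => lam j * X j d) K dg_inj'
     (fun j => @supp_scale _ (lam j) _ (HX j)).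
  rewrite /= => ->.
  apply: ler_sum => j _; rewrite knorm_scale; case: ifP => _ //.
  by rewrite mulr_ge0 ?sqn_ge0 ?knorm_ge0.
have HTyerr := Herr y c0 Hy Hyc.
rewrite HFy0 in HTyerr.
set K := (\max_(j < n.+1) dg j + p).+1.
have := @LD1 _ _ HTyerr K.
have inj2 : injective (fun j : 'I_n.+1 => (dg j + p)%N).
  by move=> i j /addIn; apply: dg_inj'.
have -> : en K (fun d => T y d - (fun _ => 0) d) =
    \sum_j sqn (lam j) * knorm (dg j + p) (T (X j)).
  have E : (fun d => T y d - (fun _ : Path => (0 : C)) d) =
      (fun d => \sum_j lam j * T (X j) d).
    by apply: functional_extensionality => d; rewrite subr0 /y HTy.
  rewrite E.
  have := @en_sumY n.+1 (fun j => dg j + p)%N (fun j d => lam j * T (X j) d) K inj2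
     (fun j => @supp_scale _ (lam j) _ (HP _ _ (HX j))).
  rewrite /= => ->.
  apply: eq_bigr => j _; rewrite ifT ?knorm_scale //.
  by rewrite ltnS leq_add2r; apply: (@leq_bigmax _ (fun j0 : 'I_n.+1 => dg j0) j).
move=> Hle.
have : del * c0 < \sum_j sqn (lam j) * knorm (dg j + p) (T (X j)).
  rewrite /c0 mulr_sumr (bigD1 jc) //= [X in _ < X](bigD1 jc) //=.
  apply: ltr_leD.
    rewrite mulrCA ltr_pM2l //.
    rewrite lt0r sqn_ge0 andbT; apply/eqP => /sqn_eq0 /eqP.
    by rewrite (negbTE Hjc).
  apply: ler_sum => j _; rewrite mulrCA ler_wpM2l ?sqn_ge0 //.
  exact: ltW (HXlt j).
by rewrite ltNge Hle.
Qed.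
Definition Pk k x : Vec := fun d => if d \in ps k then x d else 0.

Lemma supp_Pk k x : supp k (Pk k x).
Proof. by move=> d Hd; rewrite /Pk (negbTE Hd). Qed.

Lemma knorm_Pk k x : knorm k (Pk k x) = knorm k x.
Proof. by apply: knorm_ext => d Hd; rewrite /Pk Hd. Qed.

Lemma wact_ext W k x y d : (forall g, g \in ps k -> x g = y g) -> wact W k x d = wact W k y d.
Proof. by move=> H; rewrite !wactE; apply: eq_big_seq => g /H ->. Qed.

Lemma Sop_Pk a x k e : is_path a -> plen a = p -> e \in ps (k + p) ->
  Sop a x e = Sop a (Pk k x) e.
Proof.
move=> Ha Hl; rewrite mem_ps => /andP[He /eqP Hk].
rewrite !Sop_path //; case: ifP => // _.
by rewrite /Pk mem_ps pdrop_path //= plen_pdrop Hk addnK eqxx.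
Qed.

Lemma T1_restr a x k d : is_path a -> plen a = p -> d \in ps (k + p) ->
  T1 a x d = T1 a (Pk k x) d.
Proof.
move=> Ha Hl Hd; move: (Hd); rewrite mem_ps => /andP[Hdp /eqP Hk].
rewrite /T1 /opsub /opcomp !Sop_path //.
rewrite [Zop (Sop a x) d]ZopE // [Zop (Sop a (Pk k x)) d]ZopE //.
congr (_ - _).
  case: ifP => // _; rewrite !ZopE ?pdrop_path // plen_pdrop Hk addnK.
  by apply: wact_ext => g Hg; rewrite /Pk Hg.
apply: wact_ext => g; rewrite Hk => Hg; exact: Sop_Pk.
Qed.

Lemma T1_supp a k x : is_path a -> plen a = p -> supp k x -> supp (k + p) (T1 a x).
Proof.
move=> Ha Hl Hx d Hd.
case: (boolP (is_path d)) => Hp; last by rewrite T1_npath.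
have Hk : plen d != (k + p)%N by move: Hd; rewrite mem_ps Hp.
case: (ltnP (plen d) p) => Hs.
  rewrite /T1 /opsub /opcomp Sop_short // ZopE // (@wact_zero Z (plen d) (Sop a x) d) ?subr0 //.
  by move=> g; rewrite mem_ps => /andP[Hg /eqP Hgk]; rewrite Sop_short // Hgk.
rewrite /T1 /opsub /opcomp Sop_path // [Zop (Sop a x) d]ZopE //.
rewrite (@wact_zero Z (plen d) (Sop a x) d); last first.
  move=> g; rewrite mem_ps => /andP[Hg /eqP Hgk]; rewrite Sop_path //.
  case: ifP => // _; apply: Hx; rewrite mem_ps plen_pdrop Hgk negb_and; apply/orP; right.
  by move: Hk Hs; clear; lia.
rewrite subr0; case: ifP => // _; rewrite ZopE ?pdrop_path //.
apply: wact_zero => g; rewrite mem_ps plen_pdrop => /andP[Hg /eqP Hgk]; apply: Hx.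
rewrite mem_ps Hgk negb_and; apply/orP; right.
by move: Hk Hs; clear; lia.
Qed.

Lemma C1_T1 a : is_path a -> plen a = p -> compact_op src rg (T1 a) ->
  forall del, 0 < del -> exists N, forall k, (N <= k)%N -> forall x,
    knorm (k + p) (T1 a x) <= del * knorm k x.
Proof.
move=> Ha Hl Hc del Hdel.
have := @C1_gen (T1 a) Hc (fun k x Hx => @T1_supp a k x Ha Hl Hx) del Hdel.
case=> N HN; exists N => k Hk x.
rewrite (@knorm_ext (k + p) (T1 a x) (T1 a (Pk k x))); last first.
  by move=> d Hd; apply: T1_restr.
rewrite -(knorm_Pk k x); apply: HN => //; exact: supp_Pk.
Qed.
Lemma sqn_sum (I : Type) (s : seq I) (z : I -> C) :
  sqn (\sum_(i <- s) z i) <= 2 ^+ size s * \sum_(i <- s) sqn (z i).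
Proof.
elim: s => [|i s IH]; first by rewrite !big_nil sqn0 mulr0.
rewrite !big_cons /=.
apply: le_trans (sqnD _ _) _.
rewrite exprS -mulrA ler_wpM2l //.
have H1 : (1 : R) <= 2 ^+ size s by rewrite exprn_ege1 // ler1n.
rewrite mulrDr; apply: lerD; last exact: IH.
by rewrite ler_peMl ?sqn_ge0.
Qed.

Lemma UB (V : zmodType) d (F : Path -> V) : is_path d -> (p <= plen d)%N ->
  \sum_(b <- ps p) (if take p d.2 == b.2 then F b else 0) = F (ptake p d).
Proof.
move=> Hd Hpd.
have Hb : ptake p d \in ps p by rewrite mem_ps ptake_path //= plen_ptake.
rewrite (bigD1_seq (ptake p d)) ?uniq_ps //= eqxx big_seq_cond big1 ?addr0 // => b /andP[Hbm Hne].
case: ifP => // /eqP Ht.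
move: Hbm; rewrite mem_ps => /andP[Hbp /eqP Hbl].
have E := @ptake_eq p d b Hd Hbp Hbl Hp1 Ht.
by rewrite E eqxx in Hne.
Qed.

Lemma sum_Sadj_le x k : \sum_(b <- ps p) knorm k (Sadj b x) <= knorm (k + p) x.
Proof.
pose xb (b : Path) := fun d : Path => if take p d.2 == b.2 then x d else 0.
have H1 : \sum_(b <- ps p) knorm k (Sadj b x) <= \sum_(b <- ps p) knorm (k + p) (xb b).
  rewrite big_seq [X in _ <= X]big_seq; apply: ler_sum => b.
  rewrite mem_ps => /andP[Hb /eqP Hbl].
  rewrite (@knorm_ext k (Sadj b x) (Sadj b (xb b))); first exact: K1'.
  by move=> g _; rewrite /Defs.Sadj /xb /pcat /= take_size_cat ?eqxx.
apply: le_trans H1 _.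
under eq_bigr => b _ do rewrite knormE.
rewrite knormE exchange_big /= [X in X <= _]big_seq [X in _ <= X]big_seq; apply: ler_sum => d.
rewrite mem_ps => /andP[Hd /eqP Hdl].
have Hpd : (p <= plen d)%N by rewrite Hdl leq_addl.
rewrite (eq_bigr (fun b => if take p d.2 == b.2 then sqn (x d) else 0)); last first.
  by move=> b _; rewrite /xb; case: ifP; rewrite ?sqn0.
by rewrite (@UB _ d (fun _ => sqn (x d))).
Qed.

Lemma ident x k d : d \in ps (k + p) ->
  tact Z p k x d - wact Z (k + p) x d = \sum_(b <- ps p) T1 b (Pk k (Sadj b x)) d.
Proof.
move=> Hd; move: (Hd); rewrite mem_ps => /andP[Hdp /eqP Hdl].
have Hpd : (p <= plen d)%N by rewrite Hdl leq_addl.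
rewrite /T1 /opsub /opcomp sumrB.
congr (_ - _).
  apply: esym.
  rewrite (eq_big_seq (fun b => if take p d.2 == b.2 then Zop (Pk k (Sadj b x)) (pdrop p d) else 0)); last first.
    by move=> b; rewrite mem_ps => /andP[Hb /eqP Hbl]; rewrite Sop_path.
  rewrite (@UB _ d (fun b => Zop (Pk k (Sadj b x)) (pdrop p d))) //.
  rewrite ZopE ?pdrop_path // plen_pdrop Hdl addnK wactE tactE.
  rewrite [RHS]big_mkcond; apply: eq_big_seq => g Hg.
  move: (Hg); rewrite mem_ps => /andP[Hgp _].
  rewrite /Pk Hg /Defs.Sadj Hgp /=.
  by case: ifP; rewrite ?mulr0.
apply: esym.
have Hin : forall g, g \in ps (k + p) ->
    \sum_(b <- ps p) Sop b (Pk k (Sadj b x)) g = x g.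
  move=> g Hg; move: (Hg); rewrite mem_ps => /andP[Hgp /eqP Hgl].
  have Hpg : (p <= plen g)%N by rewrite Hgl leq_addl.
  rewrite (eq_big_seq (fun b => if take p g.2 == b.2 then Pk k (Sadj b x) (pdrop p g) else 0)); last first.
    by move=> b; rewrite mem_ps => /andP[Hb /eqP Hbl]; rewrite Sop_path.
  rewrite (@UB _ g (fun b => Pk k (Sadj b x) (pdrop p g))) //.
  have Hdr : pdrop p g \in ps k by rewrite mem_ps pdrop_path //= plen_pdrop Hgl addnK.
  rewrite /Pk Hdr /Defs.Sadj pdrop_path //=.
  by rewrite /psrc /Defs.ptake /= eqxx -/(ptake p g) pcat_take_drop.
rewrite (eq_big_seq (fun b => wact Z (k + p) (Sop b (Pk k (Sadj b x))) d)); last first.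
  by move=> b _; rewrite ZopE // Hdl.
under eq_bigr do rewrite wactE.
rewrite exchange_big wactE; apply: eq_big_seq => g Hg.
by rewrite -mulr_sumr Hin.
Qed.

Lemma dir2 : (forall a, is_path a -> plen a = p -> compact_op src rg (T1 a)) -> condA src rg Z p.
Proof.
move=> Hc eps Heps.
set P := size (ps p).
have HP0 : 0 < (2 : R) ^+ P by rewrite exprn_gt0.
set del := eps / 2 ^+ P.
have Hdel : 0 < del by rewrite divr_gt0.
have HN : forall b, exists N, b \in ps p -> forall k, (N <= k)%N -> forall x,
    knorm (k + p) (T1 b x) <= del * knorm k x.
  move=> b; case: (boolP (b \in ps p)) => Hb; last by exists 0%N.
  move: (Hb); rewrite mem_ps => /andP[Hbp /eqP Hbl].
  case: (@C1_T1 b Hbp Hbl (Hc b Hbp Hbl) del Hdel) => N HN'.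
  by exists N.
pose Nf b := proj1_sig (constructive_indefinite_description _ (HN b)).
have HNf : forall b, b \in ps p -> forall k, (Nf b <= k)%N -> forall x,
    knorm (k + p) (T1 b x) <= del * knorm k x.
  move=> b; exact: (proj2_sig (constructive_indefinite_description _ (HN b))).
exists (\max_(b <- ps p) Nf b) => k Hk x.
rewrite (@knorm_ext (k + p) _ (fun d => \sum_(b <- ps p) T1 b (Pk k (Sadj b x)) d)); last first.
  by move=> d Hd; apply: ident.
rewrite knormE.
have H1 : \sum_(d <- ps (k + p)) sqn (\sum_(b <- ps p) T1 b (Pk k (Sadj b x)) d) <= \sum_(d <- ps (k + p)) 2 ^+ P *
   \sum_(b <- ps p) sqn (T1 b (Pk k (Sadj b x)) d).
  by apply: ler_sum => d _; apply: sqn_sum.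
apply: le_trans H1 _.
rewrite -mulr_sumr exchange_big /=.
have H2 : 2 ^+ P * \sum_(b <- ps p) \sum_(i <- ps (k + p)) sqn (T1 b (Pk k (Sadj b x)) i) <=
    2 ^+ P * \sum_(b <- ps p) del * knorm k (Sadj b x).
  apply: ler_wpM2l; first exact: ltW.
  rewrite [X in X <= _]big_seq [X in _ <= X]big_seq; apply: ler_sum => b Hb.
  move: (Hb); rewrite mem_ps => /andP[Hbp /eqP Hbl].
  rewrite -(knorm_Pk k (Sadj b x)) -knormE; apply: HNf => //.
  by apply: leq_trans Hk; apply: (@leq_bigmax_seq _ _ xpredT Nf b Hb).
apply: le_trans H2 _.
have E : 2 ^+ P * del = eps by rewrite /del mulrC divfK // gt_eqF.
rewrite -mulr_sumr mulrA E.
apply: ler_wpM2l; first exact: ltW.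
exact: sum_Sadj_le.
Qed.
End Main.

Theorem mainTheorem5 (R : realType) (E0 E1 : finType) (src rg : E1 -> E0)
    (Z : nat -> Path E0 E1 -> Path E0 E1 -> R[i]) (p : nat) :
  no_sinks src ->
  weight_seq src rg Z ->
  (1 <= p)%N ->
  (condA src rg Z p <->
     (forall a : Path E0 E1, is_path src rg a -> plen a = p ->
        eq_modK src rg (opcomp (Sop src rg a) (Zop src rg Z))
                       (opcomp (Zop src rg Z) (Sop src rg a))))
  /\ (condA src rg Z p ->
     (forall a : Path E0 E1, is_path src rg a -> plen a = p ->
        eq_modK src rg (opcomp (Sadj src rg a) (Zop src rg Z))
                       (opcomp (Zop src rg Z) (Sadj src rg a)))).
Proof.
move=> _ Hws Hp.
case: (@Zbound R E0 E1 src rg Z Hws) => M [M0 HM].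
split; first split.
- move=> HA a Ha Hl.
  exact: (@dir1_T1 R E0 E1 src rg p Hp Z Hws M M0 HM a Ha Hl HA).
- move=> Hc; apply: (@dir2 R E0 E1 src rg p Hp Z) => a Ha Hl.
  exact: Hc.
- move=> HA a Ha Hl.
  exact: (@dir1_T2 R E0 E1 src rg p Z Hws M M0 HM a Ha Hl HA).
Qed.
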